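(* Consider a two-class problem with $p$ real-valued features, $p$ fixed. For $i=1,\ldots,n$ the observations $X_i=(X_{i1},\ldots,X_{ip})$ come from class $0$ and for $i=n+1,\ldots,n+m$ they come from class $1$. For feature $j$, let $f_j$ and $g_j$ be its marginal densities in class $0$ and class $1$. The features are independent, and every feature satisfies the regularity conditions of the leave-one-out average log-Bayes factor framework described in the context. Let $ALB_j$ be the average log-Bayes factor statistic of feature $j$ defined in the context. Let $D=\{j: f_j\not\equiv g_j\}$ be the set of informative features and $D^c$ its complement in $\{1,\ldots,p\}$. Then, as $n,m\to\infty$, $$P\Big(\max_{i\in D^c} ALB_i<\min_{j\in D} ALB_j\Big)\to 1,$$ and, when $0$ is used as the screening cutoff, $$P\Big(\min_{j\in D} ALB_j>0\ \text{ and }\ \max_{j\in D^c} ALB_j<0\Big)\to 1.$$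
   Context: Notation: $\mathbf X_j=(X_{1j},\ldots,X_{(n+m)j})$ is the vector of all observations of feature $j$. $K$ is a kernel, taken to be the Hall kernel $$K(z)=\frac{1}{\sqrt{8\pi e}\,\Phi(1)}\exp\!\big[-\tfrac12(\log(1+|z|))^2\big].$$ The bandwidth for feature $j$ is the plug-in rule $b=0.162\,(m+n)^{-1/5}s_j$, where $s_j=\mathrm{IQR}(\mathbf X_j)/1.35$. Leave-one-out kernel density estimates, each omitting observation $i$: - pooled: $\hat h_i(x)=\frac{1}{(n+m-1)b}\sum_{r\le n+m,\ r\ne i}K\!\big(\frac{x-X_{rj}}{b}\big)$; - class $0$: $\hat f_i(x)=\frac{1}{(n-1)b}\sum_{r\le n,\ r\ne i}K\!\big(\frac{x-X_{rj}}{b}\big)$; - class $1$: $\hat g_i(x)=\frac{1}{(m-1)b}\sum_{n<r\le n+m,\ r\ne i}K\!\big(\frac{x-X_{rj}}{b}\big)$. The statistic is $$(m+n)\,ALB_j=\sum_{i=n+1}^{n+m}\log\frac{\hat g_i(X_{ij})}{\hat h_i(X_{ij})}+\sum_{i=1}^{n}\log\frac{\hat f_i(X_{ij})}{\hat h_i(X_{ij})}.$$ Standing regularity assumption: the paper requires each feature to satisfy conditions A1–A5 of an earlier paper on leave-one-out average log-Bayes factor two-sample tests. Those conditions are regularity conditions on the densities, kernel and bandwidth. Under them, for each fixed feature $j$, as $n,m\to\infty$: $P(ALB_j<0)\to1$ if $f_j\equiv g_j$, and $P(ALB_j>0)\to1$ if $f_j\not\equiv g_j$. *)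

(* Defs.v *)
From HB Require Import structures.
From mathcomp Require Import all_boot all_order all_algebra.
From mathcomp Require Import all_classical all_reals all_analysis.
Set Implicit Arguments. Unset Strict Implicit. Unset Printing Implicit Defensive.
Import Order.TTheory GRing.Theory Num.Theory.
Import numFieldNormedType.Exports.
Local Open Scope classical_set_scope.
Local Open Scope ring_scope.

Section Defs.
Variable R : realType.

Definition Phi1 : R :=
  (Num.sqrt (2 * pi))^-1 *
  fine (\int[@lebesgue_measure R]_(t in `]-oo, 1%R]) (expR (- (t ^+ 2) / 2))%:E).

Definition hall_kernel (z : R) : R :=
  (Num.sqrt (8 * pi * expR 1) * Phi1)^-1 *
  expR (- (1 / 2) * (ln (1 + `|z|)) ^+ 2).

(* Empirical quantile of level a/b (type 1: the ceil(N a/b)-th order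
   statistic, at least the first) *)
Definition emp_quantile (s : seq R) (a b : nat) : R :=
  nth 0 (sort (fun x y : R => x <= y) s) ((a * size s + b - 1) %/ b).-1.

Definition emp_IQR (s : seq R) : R := emp_quantile s 3 4 - emp_quantile s 1 4.

(* data vector x_0,...,x_{N-1}, N = n+m, class 0 = indices < n *)
Definition bandwidth (n m : nat) (x : nat -> R) : R :=
  let N := (n + m)%N in
  (162%:R / 1000%:R) * (N%:R `^ (- (5%:R)^-1)) * (emp_IQR [seq x r | r <- iota 0 N] / (135%:R / 100%:R)).

Definition kde_pool (n m : nat) (x : nat -> R) (i : nat) (y : R) : R :=
  let b := bandwidth n m x in
  (((n + m).-1)%:R * b)^-1 *
  \sum_(0 <= r < n + m | r != i) hall_kernel ((y - x r) / b).

Definition kde0 (n m : nat) (x : nat -> R) (i : nat) (y : R) : R :=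
  let b := bandwidth n m x in
  ((n.-1)%:R * b)^-1 * \sum_(0 <= r < n | r != i) hall_kernel ((y - x r) / b).

Definition kde1 (n m : nat) (x : nat -> R) (i : nat) (y : R) : R :=
  let b := bandwidth n m x in
  ((m.-1)%:R * b)^-1 *
  \sum_(n <= r < n + m | r != i) hall_kernel ((y - x r) / b).

(* the ALB statistic (divided by n+m) *)
Definition ALB_stat (n m : nat) (x : nat -> R) : R :=
  ((n + m)%:R)^-1 *
  (\sum_(n <= i < n + m) ln (kde1 n m x i (x i) / kde_pool n m x i (x i)) +
   \sum_(0 <= i < n) ln (kde0 n m x i (x i) / kde_pool n m x i (x i))).

End Defs.

(* observations: X0 r j = feature j of the r-th class-0 observation,
   X1 r j = feature j of the r-th class-1 observation.  With sample sizes
   n, m we use the first n of class 0 (indices 0..n-1) and the first m of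
   class 1 (indices n..n+m-1). *)
Definition feature_data {R : realType} {T : Type} {p : nat}
  (X0 X1 : nat -> 'I_p -> T -> R) (n : nat) (j : 'I_p) (w : T) : nat -> R :=
  fun r => if (r < n)%N then X0 r j w else X1 (r - n)%N j w.

Definition ALB {R : realType} {T : Type} {p : nat}
  (X0 X1 : nat -> 'I_p -> T -> R) (n m : nat) (j : 'I_p) (w : T) : R :=
  ALB_stat n m (feature_data X0 X1 n j w).

Definition mutually_independent {d} {T : measurableType d} {R : realType}
  (P : probability T R) {I : eqType} (Y : I -> T -> R) : Prop :=
  forall (s : seq I) (A : I -> set R), uniq s ->
    (forall i, measurable (A i)) ->
    P (\bigcap_(i in [set` s]) (Y i @^-1` A i)) =
    (\big[*%E/1%E]_(i <- s) P (Y i @^-1` A i))%E.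

Definition all_obs {R : realType} {T : Type} {p : nat}
  (X0 X1 : nat -> 'I_p -> T -> R) (k : bool * nat * 'I_p) : T -> R :=
  if k.1.1 then X1 k.1.2 k.2 else X0 k.1.2 k.2.

Definition has_density {d} {T : measurableType d} {R : realType}
  (P : probability T R) (X : T -> R) (f : R -> R) : Prop :=
  forall A : set R, measurable A ->
    P (X @^-1` A) = (\int[@lebesgue_measure R]_(x in A) (f x)%:E)%E.

Definition informative {R : realType} (f g : R -> R) : Prop :=
  ~ (ae_eq (@lebesgue_measure R) setT f g).

Definition tends_to_one {R : realType} (Pr : nat -> nat -> \bar R) : Prop :=
  forall eps : R, (0 < eps)%R -> exists N : nat,
    forall n m : nat, (N <= n)%N -> (N <= m)%N -> ((1 - eps)%:E <= Pr n m)%E.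

(* Main.v *)
Require Import Defs.
From HB Require Import structures.
From mathcomp Require Import all_boot all_order all_algebra.
From mathcomp Require Import all_classical all_reals all_analysis.
From mathcomp Require Import ring lra.
Import Order.TTheory GRing.Theory Num.Theory.
Local Open Scope classical_set_scope.
Local Open Scope ring_scope.

Lemma measurable_inv (R : realType) : measurable_fun [set: R] (@GRing.inv R).
Proof.
have -> : [set: R] = [set~ 0] `|` [set 0].
  by apply/seteqP; split => x //= _; case: (eqVneq x 0) => [->|/eqP ?]; [right|left].
have m1 : measurable [set (0:R)] by exact: measurable_set1.
have m2 : measurable [set~ (0:R)] by exact: measurableC.
apply/(measurable_funU _ m2 m1); split; last exact: measurable_fun_set1.
apply: measurable_realfun.open_continuous_measurable_fun.
  rewrite openC; apply: accessible_closed_set1; apply: hausdorff_accessible.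
  exact: norm_hausdorff.
by move=> x; rewrite inE /= => /eqP x0; apply: inv_continuous.
Qed.

Lemma sorted_nth_lt (R : realType) (t : seq R) (c : R) (k : nat) : sorted <=%R t -> (k < size t)%N ->
  (nth 0 t k < c) = (k < count (fun y : R => (y < c)%R) t)%N.
Proof.
elim: t k => [//|x t IH] k /= st.
have allx : all (fun y => x <= y) t by apply: order_path_min st; exact: le_trans.
have st' : sorted <=%R t by exact: path_sorted st.
have c0 : c <= x -> count (fun y : R => (y < c)%R) t = 0%N.
  move=> cx; rewrite (@eq_in_count _ _ pred0) ?count_pred0 //.
  move=> y yt /=; apply/negbTE; rewrite -leNgt; apply: (le_trans cx).
  by move/allP: allx; apply.
case: k => [_|k] /=.
  case: ltP => xc; first by rewrite add1n.
  by rewrite add0n c0.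
rewrite ltnS => kt; case: (ltP x c) => xc.
  by rewrite add1n ltnS IH.
rewrite add0n c0 // ltn0; apply/negbTE; rewrite -leNgt; apply: (le_trans xc).
by move/all_nthP: allx; apply.
Qed.

Section meas.
Context d (T : measurableType d) (R : realType).

Lemma measurable_count (x : nat -> T -> R) (s : seq nat) (c : R) :
  (forall r, measurable_fun setT (x r)) ->
  measurable_fun setT (fun w => (count (fun y : R => (y < c)%R) [seq x r w | r <- s])%:R : R).
Proof.
move=> hx.
have -> : (fun w => (count (fun y : R => (y < c)%R) [seq x r w | r <- s])%:R : R) =
   (fun w => \sum_(r <- s) (if x r w < c then 1 else 0)).
  apply/funext => w; elim: s => [|r s IH] /=; first by rewrite big_nil.
  by rewrite big_cons natrD IH; case: ifP.
apply: measurable_sum => r; apply: measurable_fun_ifT.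
- exact: measurable_realfun.measurable_fun_ltr.
- exact: measurable_cst.
- exact: measurable_cst.
Qed.

Lemma measurable_ordstat (x : nat -> T -> R) (s : seq nat) (k : nat) :
  (forall r, measurable_fun setT (x r)) ->
  measurable_fun setT (fun w => nth 0 (sort <=%R [seq x r w | r <- s]) k).
Proof.
move=> hx; case: (ltnP k (size s)) => ks; last first.
  have -> : (fun w => nth 0 (sort <=%R [seq x r w | r <- s]) k) = (fun=> 0).
    by apply/funext => w; rewrite nth_default // size_sort size_map.
  exact: measurable_cst.
apply: (measurability _ (measurable_realfun.RGenInftyO.measurableE R)).
move=> _ [_ [c ->] <-].
have -> : setT `&` (fun w => nth 0 (sort <=%R [seq x r w | r <- s]) k) @^-1` `]-oo, c[
   = setT `&` (fun w => (count (fun y : R => (y < c)%R) [seq x r w | r <- s])%:R : R) @^-1` `]k%:R, +oo[.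
  have ss w : sorted <=%R (sort <=%R [seq x r w | r <- s]) by apply: sort_sorted; exact: le_total.
  have sz w : (k < size (sort <=%R [seq x r w | r <- s]))%N by rewrite size_sort size_map.
  apply/seteqP; split => w /= [_ h]; split => //; move: h; rewrite !in_itv /= ?andbT.
    by rewrite ltr_nat -(count_sort <=%R) -sorted_nth_lt.
  by rewrite ltr_nat -(count_sort <=%R) -sorted_nth_lt.
apply: measurable_count => //.
Qed.

Lemma measurable_hall : measurable_fun setT (@hall_kernel R).
Proof.
rewrite /hall_kernel.
apply: measurable_realfun.measurable_funM; first exact: measurable_cst.
apply: measurableT_comp; first exact: measurable_realfun.measurable_expR.
apply: measurable_realfun.measurable_funM; first exact: measurable_cst.
apply: measurable_realfun.measurable_funX.
apply: measurableT_comp; first exact: measurable_realfun.measurable_ln.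
apply: measurable_realfun.measurable_funD; first exact: measurable_cst.
exact: measurable_realfun.normr_measurable.
Qed.

Variable x : nat -> T -> R.
Hypothesis hx : forall r, measurable_fun setT (x r).

Lemma m_quant s a b : measurable_fun setT (fun w => emp_quantile [seq x r w | r <- s] a b).
Proof.
rewrite /emp_quantile; under eq_fun do rewrite size_map.
exact: measurable_ordstat.
Qed.

Lemma m_bw n m : measurable_fun setT (fun w => bandwidth n m (fun r => x r w)).
Proof.
rewrite /bandwidth /emp_IQR.
apply: measurable_realfun.measurable_funM; first exact: measurable_cst.
apply: measurable_realfun.measurable_funM; last exact: measurable_cst.
apply: measurable_realfun.measurable_funB; exact: m_quant.
Qed.

Lemma m_kernsum (b : T -> R) (y : T -> R) (s : seq nat) (P : pred nat) :
  measurable_fun setT b -> measurable_fun setT y ->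
  measurable_fun setT (fun w => \sum_(r <- s | P r) hall_kernel ((y w - x r w) / b w)).
Proof.
move=> mb my.
under eq_fun do rewrite big_mkcond.
apply: measurable_sum => r; case: (P r); last exact: measurable_cst.
apply: measurableT_comp; first exact: measurable_hall.
apply: measurable_realfun.measurable_funM.
  exact: measurable_realfun.measurable_funB.
apply: measurableT_comp; first exact: measurable_inv.
exact: mb.
Qed.

Lemma m_kde n m i : 
  measurable_fun setT (fun w => kde_pool n m (fun r => x r w) i (x i w)) /\
  measurable_fun setT (fun w => kde0 n m (fun r => x r w) i (x i w)) /\
  measurable_fun setT (fun w => kde1 n m (fun r => x r w) i (x i w)).
Proof.
have mb := m_bw n m.
have mi : measurable_fun setT (fun w => (((n + m).-1)%:R * bandwidth n m (fun r => x r w))^-1).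
  apply: measurableT_comp; first exact: measurable_inv.
  by apply: measurable_realfun.measurable_funM; first exact: measurable_cst.
rewrite /kde_pool /kde0 /kde1; split; [|split];
  (apply: measurable_realfun.measurable_funM; [
     apply: measurableT_comp; [exact: measurable_inv|];
     by apply: measurable_realfun.measurable_funM; first exact: measurable_cst
   | exact: m_kernsum]).
Qed.

Lemma m_ALB n m : measurable_fun setT (fun w => ALB_stat n m (fun r => x r w)).
Proof.
rewrite /ALB_stat.
apply: measurable_realfun.measurable_funM; first exact: measurable_cst.
apply: measurable_realfun.measurable_funD; apply: measurable_sum => i;
  (apply: measurableT_comp; [exact: measurable_realfun.measurable_ln|]);
  have [m1 [m2 m3]] := m_kde n m i;
  (apply: measurable_realfun.measurable_funM; [by []|]);
  (apply: measurableT_comp; [exact: measurable_inv| exact: m1]).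
Qed.
End meas.

Section prob.
Context d (T : measurableType d) (R : realType) (P : probability T R).

Lemma Pfin {A : set T} : measurable A -> P A = (fine (P A))%:E.
Proof. by move=> mA; rewrite fineK //; exact: fin_num_measure. Qed.

Lemma PI_ge (A B : set T) (e1 e2 : R) : measurable A -> measurable B ->
  ((1 - e1)%:E <= P A)%E -> ((1 - e2)%:E <= P B)%E -> ((1 - (e1 + e2))%:E <= P (A `&` B))%E.
Proof.
move=> mA mB hA hB.
have mD : measurable (A `\` B) by exact: measurableD.
have mC : measurable (~` B) by exact: measurableC.
have mI : measurable (A `&` B) by exact: measurableI.
have h1 := @measureDI _ _ _ P _ _ mA mB.
have h2 := probability_setC P mB.
have h3 : (P (A `\` B) <= P (~` B))%E.
  by apply: le_measure; rewrite ?inE // => x [].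
have h1' : fine (P A) = fine (P (A `\` B)) + fine (P (A `&` B)).
  by rewrite h1 fineD //; exact: fin_num_measure.
move: hA hB h2 h3.
rewrite (Pfin mA) (Pfin mB) (Pfin mD) (Pfin mC) (Pfin mI) !lee_fin -EFinD.
move=> hA hB [h2] h3; lra.
Qed.

Lemma meas_forall_seq (I : eqType) (s : seq I) (B : I -> set T) :
  (forall j, measurable (B j)) -> measurable [set w | forall j, j \in s -> B j w].
Proof.
move=> mB; elim: s => [|j s IH].
  by rewrite (_ : [set w | _] = setT) //; apply/seteqP; split => w //= _ j.
rewrite (_ : [set w | _] = B j `&` [set w | forall j, j \in s -> B j w]).
  exact: measurableI.
apply/seteqP; split => w /=.
  by move=> h; split => [|k ks]; apply: h; rewrite inE ?eqxx ?ks ?orbT.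
by move=> [h1 h2] k; rewrite inE => /orP [/eqP ->|/h2].
Qed.

Lemma meas_forall (I : finType) (B : I -> set T) :
  (forall j, measurable (B j)) -> measurable [set w | forall j, B j w].
Proof.
move=> mB; rewrite (_ : [set w | _] = [set w | forall j, j \in enum I -> B j w]).
  exact: meas_forall_seq.
by apply/seteqP; split => w /= h j; [move=> _; apply: h | apply: h; rewrite mem_enum].
Qed.

Lemma union_seq (I : eqType) (s : seq I) (B : I -> set T) (e : R) :
  (forall j, measurable (B j)) -> (forall j, ((1 - e)%:E <= P (B j))%E) ->
  ((1 - (size s)%:R * e)%:E <= P [set w | forall j, j \in s -> B j w])%E.
Proof.
move=> mB hB; elim: s => [|j s IH].
  rewrite (_ : [set w | _] = setT); last by apply/seteqP; split => w //= _ j.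
  by rewrite probability_setT mul0r subr0.
rewrite (_ : [set w | _] = B j `&` [set w | forall j, j \in s -> B j w]).
  rewrite /= -addn1 natrD mulrDl mul1r (addrC _ e).
  by apply: PI_ge => //; exact: meas_forall_seq.
apply/seteqP; split => w /=.
  by move=> h; split => [|k ks]; apply: h; rewrite inE ?eqxx ?ks ?orbT.
by move=> [h1 h2] k; rewrite inE => /orP [/eqP ->|/h2].
Qed.

Lemma union_fin (p : nat) (B : 'I_p -> set T) (e : R) :
  (forall j, measurable (B j)) -> (forall j, ((1 - e)%:E <= P (B j))%E) ->
  ((1 - p%:R * e)%:E <= P [set w | forall j, B j w])%E.
Proof.
move=> mB hB; have := @union_seq _ (enum 'I_p) B e mB hB.
rewrite size_enum_ord (_ : [set w | _] = [set w | forall j, B j w]) //.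
by apply/seteqP; split => w /= h j; [apply: h; rewrite mem_enum | move=> _; apply: h].
Qed.

Lemma meas_lt (f g : T -> R) : measurable_fun setT f -> measurable_fun setT g ->
  measurable [set w | f w < g w].
Proof.
move=> mf mg.
have := measurable_realfun.measurable_fun_ltr mf mg measurableT (Y := [set true]) ltac:(by []).
by rewrite setTI; congr measurable; apply/seteqP; split => w /=.
Qed.
End prob.

Theorem theorem1 (R : realType) (d : measure_display) (T : measurableType d)
  (P : probability T R) (p : nat) (X0 X1 : nat -> 'I_p -> T -> R)
  (f g : 'I_p -> R -> R)
  (hX0 : forall r j, measurable_fun setT (X0 r j))
  (hX1 : forall r j, measurable_fun setT (X1 r j))
  (hf : forall j x, 0 <= f j x) (hg : forall j x, 0 <= g j x)
  (hfm : forall j, measurable_fun setT (f j))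
  (hgm : forall j, measurable_fun setT (g j))
  (hd0 : forall r j, has_density P (X0 r j) (f j))
  (hd1 : forall r j, has_density P (X1 r j) (g j))
  (hind : mutually_independent P (all_obs X0 X1))
  (hreg : forall j : 'I_p,
     (~ informative (f j) (g j) ->
        tends_to_one (fun n m => P [set w | ALB X0 X1 n m j w < 0])) /\
     (informative (f j) (g j) ->
        tends_to_one (fun n m => P [set w | 0 < ALB X0 X1 n m j w]))) :
  tends_to_one (fun n m => P [set w | forall i j : 'I_p,
      ~ informative (f i) (g i) -> informative (f j) (g j) ->
      ALB X0 X1 n m i w < ALB X0 X1 n m j w]) /\
  tends_to_one (fun n m => P [set w |
      (forall j : 'I_p, informative (f j) (g j) -> 0 < ALB X0 X1 n m j w) /\
      (forall j : 'I_p, ~ informative (f j) (g j) -> ALB X0 X1 n m j w < 0)]).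
Proof.
have mA : forall n m j, measurable_fun setT (ALB X0 X1 n m j).
  move=> n m j.
  have := @m_ALB _ T R (fun r w => feature_data X0 X1 n j w r) _ n m; apply.
  move=> r; rewrite /feature_data /=; case: (r < n)%N; [exact: hX0 | exact: hX1].
pose B n m j := [set w | (informative (f j) (g j) -> 0 < ALB X0 X1 n m j w) /\
    (~ informative (f j) (g j) -> ALB X0 X1 n m j w < 0)].
have Bpos : forall n m j, informative (f j) (g j) ->
    B n m j = [set w | 0 < ALB X0 X1 n m j w].
  move=> n m j hi; apply/seteqP; split => w /=; first by case=> h _; exact: h hi.
  by move=> h; split => // /(_ hi).
have Bneg : forall n m j, ~ informative (f j) (g j) ->
    B n m j = [set w | ALB X0 X1 n m j w < 0].
  move=> n m j hi; apply/seteqP; split => w /=; first by case=> _ h; exact: h hi.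
  by move=> h; split => // /hi.
have mB : forall n m j, measurable (B n m j).
  move=> n m j; case: (pselect (informative (f j) (g j))) => hi.
    by rewrite Bpos //; apply: meas_lt => //; exact: measurable_cst.
  by rewrite Bneg //; apply: meas_lt => //; exact: measurable_cst.
have main : tends_to_one (fun n m => P [set w | forall j, B n m j w]).
  move=> eps eps0.
  pose k : R := (p.+1)%:R.
  have k0 : 0 < k by rewrite /k ltr0Sn.
  pose e := eps / k.
  have e0 : 0 < e by rewrite /e divr_gt0.
  have hN : forall j : 'I_p, exists N : nat, forall n m : nat, (N <= n)%N -> (N <= m)%N ->
      ((1 - e)%:E <= P (B n m j))%E.
    move=> j; case: (pselect (informative (f j) (g j))) => hi.
      have [N hN] := (hreg j).2 hi e e0; exists N => n m hn hm.
      by rewrite Bpos //; exact: hN.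
    have [N hN] := (hreg j).1 hi e e0; exists N => n m hn hm.
    by rewrite Bneg //; exact: hN.
  have [Nf hNf] := choice hN.
  exists (\max_(j : 'I_p) Nf j)%N => n m hn hm.
  have h := @union_fin _ T R P p (B n m) e (mB n m) (fun j => hNf j n m
     (leq_trans (leq_bigmax j) hn) (leq_trans (leq_bigmax j) hm)).
  apply: le_trans h; rewrite lee_fin.
  have -> : p%:R * e = eps - e.
    rewrite /e /k -natr1; field.
    by rewrite natr1 pnatr_eq0.
  lra.
have eq2 : forall n m, [set w | forall j, B n m j w] = [set w |
      (forall j : 'I_p, informative (f j) (g j) -> 0 < ALB X0 X1 n m j w) /\
      (forall j : 'I_p, ~ informative (f j) (g j) -> ALB X0 X1 n m j w < 0)].
  move=> n m; apply/seteqP; split => w /=.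
    by move=> h; split => j hj; have [h1 h2] := h j; [exact: h1 | exact: h2].
  by move=> [h1 h2] j; split; [exact: h1 | exact: h2].
split; last first.
  by move=> eps eps0; have [N hN] := main eps eps0; exists N => n m hn hm; rewrite -eq2; exact: hN.
move=> eps eps0; have [N hN] := main eps eps0; exists N => n m hn hm.
apply: le_trans (hN n m hn hm) _.
apply: le_measure; rewrite ?inE.
- exact: meas_forall.
- apply: (@meas_forall _ _ 'I_p (fun i : 'I_p => [set w | forall j : 'I_p,
      ~ informative (f i) (g i) -> informative (f j) (g j) ->
      ALB X0 X1 n m i w < ALB X0 X1 n m j w])) => i.
  apply: (@meas_forall _ _ 'I_p (fun j : 'I_p => [set w |
      ~ informative (f i) (g i) -> informative (f j) (g j) ->
      ALB X0 X1 n m i w < ALB X0 X1 n m j w])) => j.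
  case: (pselect (~ informative (f i) (g i) /\ informative (f j) (g j))) => [[hi hj]|hij].
    rewrite (_ : [set w | _] = [set w | ALB X0 X1 n m i w < ALB X0 X1 n m j w]).
      exact: meas_lt.
    by apply/seteqP; split => w /=; [move/(_ hi hj) | move=> h _ _].
  rewrite (_ : [set w | _] = setT) //.
  by apply/seteqP; split => w //= _ hi hj; exfalso; exact: hij.
- move=> w /= h i j hi hj; have [h1 _] := h j; have [_ h2] := h i.
  by apply: (@lt_trans _ _ 0); [exact: h2 | exact: h1].
Qed.
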